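(* Let $V=\mathbb R^{p,q}$, $W$ a $C\ell^0(V)$-module, $\Pi:\wedge^2W\to V$ an $\mathfrak o(V)$-equivariant linear map, $p=p'+p''$ with $p'\equiv3\pmod4$, and $b=b(\Pi)$. Then the kernels of the linear maps $W\to W^*\otimes V$, $s\mapsto\Pi(s\wedge\cdot)$, and $W\to W^*$, $s\mapsto b(s,\cdot)$, coincide. In particular $\Pi$ is nondegenerate if and only if $b$ is nondegenerate.
   Context: Let $V=\mathbb{R}^{p,q}$ be $\mathbb R^{p+q}$ with the scalar product $\langle x,y\rangle=\sum_{i=1}^{p}x^iy^i-\sum_{j=p+1}^{p+q}x^jy^j$ and its standard orthonormal basis. The Clifford algebra $C\ell(V)$ is generated by $V$ subject to $xy+yx=-2\langle x,y\rangle 1$, with even part $C\ell^0(V)$. Identify $\mathfrak{o}(V)=\wedge^2V$ via $(x\wedge y)(z)=\langle y,z\rangle x-\langle x,z\rangle y$; the map $x\wedge y\mapsto-\frac14(xy-yx)$ is a Lie algebra isomorphism of $\mathfrak o(V)$ onto $\mathfrak{spin}(V)\subset C\ell^0(V)$, and via it $\mathfrak o(V)$ acts on any $C\ell^0(V)$-module $W$. $\Pi$ is called nondegenerate if $s\mapsto\Pi(s\wedge\cdot)$ is injective. Fix $p=p'+p''$ with $p'\equiv 3\pmod 4$; $e_1,\dots,e_{p'}$ are the first $p'$ standard basis vectors, spanning $E$, and $b(s,t)=\langle e_1,\Pi(e_2\cdots e_{p'}s\wedge t)\rangle$ for $s,t\in W$ (Clifford product acting on $W$). *)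

(* Defs.v *)
From HB Require Import structures.
From mathcomp Require Import all_boot all_order all_algebra.
From mathcomp Require Import reals.
Set Implicit Arguments. Unset Strict Implicit. Unset Printing Implicit Defensive.
Import Order.TTheory GRing.Theory Num.Theory.
Local Open Scope ring_scope.

(* V = R^{p,q} = R^n with n = p + q, vectors are column vectors 'cV[R]_n,
   standard orthonormal basis e_1..e_n (0-indexed here: e_{k+1} = stdb k). *)

Section Clifford.
Variable R : realType.

Definition spq (p : nat) {n : nat} (x y : 'cV[R]_n) : R :=
  \sum_(i < n) (if (i < p)%N then 1 else -1) * x i 0 * y i 0.

Definition stdb {n : nat} (k : nat) : 'cV[R]_n :=
  \col_(i < n) (if (i == k :> nat) then 1 else 0).

(* Clifford algebra Cl(V): elements are coordinates on the basis
   e_A = e_{a_1} ... e_{a_k} (a_1 < ... < a_k), A a subset of indices. *)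
Notation clif n := {ffun {set 'I_n} -> R}.

(* e_i^2 = - <e_i, e_i> *)
Definition clsq (p : nat) {n : nat} (i : 'I_n) : R :=
  if (i < p)%N then -1 else 1.

Definition symd {n : nat} (A B : {set 'I_n}) : {set 'I_n} :=
  (A :\: B) :|: (B :\: A).

(* e_A e_B = clsign A B * e_{A symd B} *)
Definition clsign (p : nat) {n : nat} (A B : {set 'I_n}) : R :=
  (-1) ^+ #|[set ab in setX A B | (ab.2 < ab.1)%N]|
  * \prod_(i in A :&: B) clsq p i.

Definition clmul (p : nat) {n : nat} (c d : clif n) : clif n :=
  [ffun C => \sum_(A : {set 'I_n}) \sum_(B : {set 'I_n})
      (if symd A B == C then c A * d B * clsign p A B else 0)].

Definition cllin {n : nat} (a : R) (c d : clif n) : clif n :=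
  [ffun A => a * c A + d A].

Definition cl1 {n : nat} : clif n := [ffun A => if A == set0 then 1 else 0].

Definition clvec {n : nat} (x : 'cV[R]_n) : clif n :=
  [ffun A => \sum_(i < n) (if A == [set i] then x i 0 else 0)].

Definition cleven {n : nat} (c : clif n) : Prop :=
  forall A : {set 'I_n}, odd #|A| -> c A = 0.

(* W = R^m (column vectors) is a Cl^0(V)-module via rho: rho restricted to
   Cl^0(V) is a unital algebra homomorphism Cl^0(V) -> End(W) = 'M_m
   (acting on the left: c . s = rho c *m s). Values of rho outside Cl^0
   are irrelevant. *)
Definition is_cl0_module (p : nat) {n m : nat} (rho : clif n -> 'M[R]_m) : Prop :=
  [/\ rho cl1 = 1%:M,
      (forall (a : R) (c d : clif n), cleven c -> cleven d ->
          rho (cllin a c d) = a *: rho c + rho d) &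
      (forall c d : clif n, cleven c -> cleven d ->
          rho (clmul p c d) = rho c *m rho d)].

(* a linear map wedge^2 W -> V, given as an alternating bilinear map *)
Definition is_wedge2_map {n m : nat} (Pi : 'cV[R]_m -> 'cV[R]_m -> 'cV[R]_n) : Prop :=
  [/\ (forall (a : R) (s s' t : 'cV[R]_m), Pi (a *: s + s') t = a *: Pi s t + Pi s' t),
      (forall (a : R) (s t t' : 'cV[R]_m), Pi s (a *: t + t') = a *: Pi s t + Pi s t') &
      (forall s : 'cV[R]_m, Pi s s = 0)].

(* (x wedge y) in o(V) acting on V: z |-> <y,z> x - <x,z> y *)
Definition soV (p : nat) {n : nat} (x y z : 'cV[R]_n) : 'cV[R]_n :=
  spq p y z *: x - spq p x z *: y.

(* image of x wedge y in spin(V) : -1/4 (xy - yx) *)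
Definition spinel (p : nat) {n : nat} (x y : 'cV[R]_n) : clif n :=
  [ffun A => (- 4%:R^-1) * (clmul p (clvec x) (clvec y) A
                              - clmul p (clvec y) (clvec x) A)].

(* o(V)-equivariance of Pi, for o(V) acting on W through spin(V) *)
Definition equivariant (p : nat) {n m : nat} (rho : clif n -> 'M[R]_m)
    (Pi : 'cV[R]_m -> 'cV[R]_m -> 'cV[R]_n) : Prop :=
  forall (x y : 'cV[R]_n) (s t : 'cV[R]_m),
    Pi (rho (spinel p x y) *m s) t + Pi s (rho (spinel p x y) *m t)
    = soV p x y (Pi s t).

(* the Clifford product e_2 e_3 ... e_{p'} (1-based indices as in the paper) *)
Definition gammaE (p p' : nat) {n : nat} : clif n :=
  foldr (fun k acc => clmul p (clvec (stdb k)) acc) cl1 (iota 1 (p'.-1)).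

(* b(s,t) = < e_1, Pi(e_2 ... e_{p'} s wedge t) > *)
Definition bform (p p' : nat) {n m : nat} (rho : clif n -> 'M[R]_m)
    (Pi : 'cV[R]_m -> 'cV[R]_m -> 'cV[R]_n) (s t : 'cV[R]_m) : R :=
  spq p (stdb 0) (Pi (rho (gammaE p p') *m s) t).

Definition Pi_nondeg {n m : nat} (Pi : 'cV[R]_m -> 'cV[R]_m -> 'cV[R]_n) : Prop :=
  forall s s' : 'cV[R]_m, (forall t, Pi s t = Pi s' t) -> s = s'.

Definition form_nondeg {m : nat} (b : 'cV[R]_m -> 'cV[R]_m -> R) : Prop :=
  forall s s' : 'cV[R]_m, (forall t, b s t = b s' t) -> s = s'.

End Clifford.

(* Main.v *)
Require Import Defs.
From HB Require Import structures.
From mathcomp Require Import all_boot all_order all_algebra.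
From mathcomp Require Import reals.
From mathcomp Require Import ring lra zify.
Import Order.TTheory GRing.Theory Num.Theory.
Local Open Scope ring_scope.
Set Implicit Arguments. Unset Strict Implicit.

Section Cl.
Variable R : realType.
Variables (p n : nat).
Notation clif := {ffun {set 'I_n} -> R}.

Definition mono (A : {set 'I_n}) : clif := [ffun C => if C == A then 1 else 0].
Definition scal (a : R) (c : clif) : clif := [ffun C => a * c C].
Definition clz : clif := [ffun _ => 0].

Lemma clmul_mono A B :
  clmul p (mono A) (mono B) = scal (clsign R p A B) (mono (symd A B)).
Proof.
apply/ffunP => C; rewrite /mono !ffunE (bigD1 A) //= [X in _ + X]big1 ?addr0; last first.
  move=> A' nA; apply: big1 => B' _; rewrite !ffunE (negbTE nA).
  by case: ifP => _; rewrite ?mul0r.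
rewrite (bigD1 B) //= [X in _ + X]big1 ?addr0; last first.
  move=> B' nB; rewrite !ffunE (negbTE nB) eqxx.
  by case: ifP => _; rewrite ?mulr0 ?mul0r.
rewrite !ffunE !eqxx !mul1r eq_sym.
by case: ifP => _; rewrite ?mulr1 ?mulr0.
Qed.

Lemma clvec_stdb (i : 'I_n) : clvec (stdb R i) = mono [set i].
Proof.
apply/ffunP => C; rewrite !ffunE (bigD1 i) //= big1 ?addr0.
  by rewrite mxE eqxx.
move=> j nj; rewrite mxE.
by case: ifP => _ //; case: eqP => // /val_inj ej; rewrite ej eqxx in nj.
Qed.

Lemma clsign_lt (A B : {set 'I_n}) : (forall x y, x \in A -> y \in B -> (x < y)%N) ->
  clsign R p A B = 1 /\ symd A B = A :|: B.
Proof.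
move=> h; split.
  rewrite /clsign.
  have -> : [set ab in setX A B | (ab.2 < ab.1)%N] = set0.
    apply/setP => -[x y]; rewrite !inE /=.
    case xA: (x \in A); case yB: (y \in B) => //=.
    by rewrite ltnNge ltnW // h.
  have -> : A :&: B = set0.
    apply/setP => x; rewrite !inE.
    case xA: (x \in A); case xB: (x \in B) => //=.
    by have := h x x xA xB; rewrite ltnn.
  by rewrite cards0 big_set0 expr0 mulr1.
apply/setP => x; rewrite !inE.
case xA: (x \in A); case xB: (x \in B) => //=.
by have := h x x xA xB; rewrite ltnn.
Qed.

Lemma clsign_gt1 (a b : 'I_n) : (a < b)%N -> clsign R p [set b] [set a] = -1.
Proof.
move=> ab; have nba : b != a by apply/eqP => e; move: ab; rewrite e ltnn.
rewrite /clsign.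
have -> : [set ab in setX [set b] [set a] | (ab.2 < ab.1)%N] = [set (b, a)].
  apply/setP => -[x y]; rewrite !inE /= xpair_eqE.
  by case: eqP => [->|] //=; case: eqP => [->|] //=; rewrite ab.
have -> : [set b] :&: [set a] = set0.
  apply/setP => x; rewrite !inE.
  by case: (eqVneq x b) => [->|] //=; rewrite (negbTE nba).
by rewrite cards1 big_set0 expr1 mulr1.
Qed.

Lemma clsign_pair (a b : 'I_n) : (a < b)%N ->
  clsign R p [set a; b] [set a; b] = - (clsq R p a * clsq R p b).
Proof.
move=> ab; have nab : a != b by apply/eqP => e; move: ab; rewrite e ltnn.
rewrite /clsign.
have -> : [set ab in setX [set a; b] [set a; b] | (ab.2 < ab.1)%N] = [set (b, a)].
  apply/setP => -[x y]; rewrite !inE /= xpair_eqE.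
  case: (eqVneq x a) => [->|xa].
    rewrite (negbTE nab) /=.
    case: (eqVneq y a) => [->|_]; first by rewrite ltnn andbF.
    case: (eqVneq y b) => [->|_] //=.
    by rewrite ltnNge ltnW.
  rewrite /=; case: (eqVneq x b) => [->|xb] //=.
  case: (eqVneq y a) => [->|_] /=; first by rewrite ab.
  by case: (eqVneq y b) => [->|_] /=; rewrite ?ltnn.
rewrite setIid cards1 expr1 big_setU1 /= ?big_set1 ?mulN1r // inE.
exact: nab.
Qed.

End Cl.

Section Cl2.
Variable R : realType.
Variables (p n : nat).
Notation clif := {ffun {set 'I_n} -> R}.

Lemma symdC (A B : {set 'I_n}) : symd A B = symd B A.
Proof. by rewrite /symd setUC. Qed.

Lemma spinel_pair (a b : 'I_n) : (a < b)%N ->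
  spinel p (stdb R a) (stdb R b) = scal (- 2%:R^-1) (mono R [set a; b]).
Proof.
move=> ab.
have [c1 s1] : clsign R p [set a] [set b] = 1 /\ symd [set a] [set b] = [set a] :|: [set b].
  by apply: clsign_lt => x y; rewrite !inE => /eqP -> /eqP ->.
have c2 := clsign_gt1 R p ab.
apply/ffunP => C; rewrite /spinel ffunE !clvec_stdb !clmul_mono.
rewrite [symd [set b] _]symdC s1 c1 c2 !ffunE.
case: ifP => _; last by rewrite !mulr0 subr0 mulr0.
have h4 : (4%:R : R) = 2%:R * 2%:R by rewrite -natrM.
rewrite h4 invfM; field.
by [].
Qed.

Definition Iv (a b : nat) : {set 'I_n} := [set i : 'I_n | (a <= i < b)%N].

Lemma Iv_nil a : Iv a a = set0.
Proof.
apply/setP => i; rewrite !inE; case: (leqP a i) => //= h; by rewrite ltnNge h.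
Qed.

Lemma Iv_cons a l (ha : (a < n)%N) :
  Iv a (a + l.+1) = [set Ordinal ha] :|: Iv a.+1 (a.+1 + l).
Proof.
apply/setP => i; rewrite !inE -val_eqE /=; lia.
Qed.

Lemma notin_Iv a b (ha : (a < n)%N) : Ordinal ha \notin Iv a.+1 b.
Proof. by rewrite inE /= ltnn. Qed.

Lemma gamma_fold l : forall a, (a + l <= n)%N ->
  foldr (fun k acc => clmul p (clvec (stdb R k)) acc) (cl1 R) (iota a l)
  = mono R (Iv a (a + l)).
Proof.
elim: l => [|l IH] a hal.
  rewrite addn0 Iv_nil /=; apply/ffunP => C; by rewrite !ffunE.
have ha : (a < n)%N by apply: leq_trans hal; rewrite -addSnnS leq_addr.
rewrite /= IH; last by rewrite addSnnS.
have -> : stdb R a = stdb R (Ordinal ha) by [].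
rewrite clvec_stdb clmul_mono.
have [c1 s1] : clsign R p [set Ordinal ha] (Iv a.+1 (a.+1 + l)) = 1 /\
     symd [set Ordinal ha] (Iv a.+1 (a.+1 + l)) = [set Ordinal ha] :|: Iv a.+1 (a.+1 + l).
  apply: clsign_lt => x y; rewrite !inE => /eqP -> /andP [h _] //.
rewrite c1 s1 -Iv_cons; apply/ffunP => C; by rewrite !ffunE mul1r.
Qed.

Lemma card_Iv l : forall a, (a + l <= n)%N -> #|Iv a (a + l)| = l.
Proof.
elim: l => [|l IH] a hal; first by rewrite addn0 Iv_nil cards0.
have ha : (a < n)%N by apply: leq_trans hal; rewrite -addSnnS leq_addr.
rewrite Iv_cons cardsU1 notin_Iv IH //; by rewrite addSnnS.
Qed.

End Cl2.

Lemma dbl0 (V : zmodType) (x : V) : x = x + x -> x = 0.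
Proof. by move=> h; have := congr1 (fun y => y - x) h; rewrite subrr addrK => <-. Qed.

Section Main.
Variables (R : realType) (p n m : nat).
Variable rho : {ffun {set 'I_n} -> R} -> 'M[R]_m.
Variable Pi : 'cV[R]_m -> 'cV[R]_m -> 'cV[R]_n.
Hypothesis Hrho : is_cl0_module p rho.
Hypothesis HPi : is_wedge2_map Pi.
Hypothesis Heq : equivariant p rho Pi.

Lemma Pi0l t : Pi 0 t = 0.
Proof.
case: HPi => h _ _; have := h 1 0 0 t; rewrite !scale1r addr0; exact: dbl0.
Qed.
Lemma Pi0r s : Pi s 0 = 0.
Proof.
case: HPi => _ h _; have := h 1 s 0 0; rewrite !scale1r addr0; exact: dbl0.
Qed.
Lemma PiZl a s t : Pi (a *: s) t = a *: Pi s t.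
Proof. by case: HPi => h _ _; have := h a s 0 t; rewrite addr0 Pi0l addr0. Qed.
Lemma PiZr a s t : Pi s (a *: t) = a *: Pi s t.
Proof. by case: HPi => _ h _; have := h a s t 0; rewrite addr0 Pi0r addr0. Qed.
Lemma PiDl s s' t : Pi (s + s') t = Pi s t + Pi s' t.
Proof. by case: HPi => h _ _; have := h 1 s s' t; rewrite !scale1r. Qed.
Lemma PiBl s s' t : Pi (s - s') t = Pi s t - Pi s' t.
Proof. by rewrite PiDl -scaleN1r PiZl scaleN1r. Qed.

Lemma rho_clz : rho (clz R n) = 0.
Proof.
case: Hrho => _ h _.
have e : cllin 1 (clz R n) (clz R n) = clz R n by apply/ffunP => C; rewrite !ffunE mul1r addr0.
have ev : cleven (clz R n) by move=> C _; rewrite ffunE.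
have := h 1 _ _ ev ev; rewrite e scale1r ; exact: dbl0.
Qed.

Lemma cleven_mono (A : {set 'I_n}) : ~~ odd #|A| -> cleven (mono R A).
Proof. move=> hA C hC; rewrite ffunE; case: eqP => // eC; by rewrite -eC hC in hA. Qed.

Lemma rho_scal a c : cleven c -> rho (scal a c) = a *: rho c.
Proof.
case: Hrho => _ h _ ev.
have e : scal a c = cllin a c (clz R n) by apply/ffunP => C; rewrite !ffunE addr0.
have ev0 : cleven (clz R n) by move=> C _; rewrite ffunE.
by rewrite e h // rho_clz addr0.
Qed.

Lemma rho_mul c d : cleven c -> cleven d -> rho (clmul p c d) = rho c *m rho d.
Proof. by case: Hrho => _ _ h; apply: h. Qed.

Lemma mono0 : mono R (set0 : {set 'I_n}) = cl1 R.
Proof. by apply/ffunP => C; rewrite !ffunE. Qed.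

Lemma rho_cl1 : rho (cl1 R) = 1%:M.
Proof. by case: Hrho. Qed.

Lemma rho_sq (A : {set 'I_n}) : ~~ odd #|A| ->
  rho (mono R A) *m rho (mono R A) = clsign R p A A *: 1%:M.
Proof.
move=> hA; have ev := cleven_mono hA; rewrite -rho_mul // clmul_mono.
have -> : symd A A = set0 by rewrite /symd setDv setU0.
rewrite mono0 rho_scal ?rho_cl1 // -mono0; apply: cleven_mono; by rewrite cards0.
Qed.

Definition kerPi s := forall t, Pi s t = 0.

Lemma soV0 (x y : 'cV[R]_n) : soV p x y 0 = 0.
Proof.
have h : forall z : 'cV[R]_n, spq p z 0 = 0.
  by move=> z; rewrite /spq big1 // => i _; rewrite mxE mulr0.
by rewrite /soV !h !scale0r subr0.
Qed.

Lemma ker_spinel x y s : kerPi s -> kerPi (rho (spinel p x y) *m s).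
Proof.
move=> hs t; have := Heq x y s t.
by rewrite (hs t) (hs (rho (spinel p x y) *m t)) addr0 soV0.
Qed.

Lemma ker_scale c s : kerPi s -> kerPi (c *: s).
Proof. by move=> hs t; rewrite PiZl hs scaler0. Qed.

Lemma ker_pair (a b : 'I_n) : (a < b)%N -> forall s,
  kerPi s -> kerPi (rho (mono R [set a; b]) *m s).
Proof.
move=> ab s hs.
have nab : a != b by apply/eqP => e; move: ab; rewrite e ltnn.
have ev : cleven (mono R [set a; b]) by apply: cleven_mono; rewrite cards2 nab.
have e : rho (mono R [set a; b]) = (- 2%:R) *: rho (spinel p (stdb R a) (stdb R b)).
  rewrite spinel_pair // rho_scal // scalerA.
  have -> : - (2%:R : R) * - 2%:R^-1 = 1 by rewrite mulrNN divff // pnatr_eq0.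
  by rewrite scale1r.
by rewrite e -scalemxAl; apply/ker_scale/ker_spinel.
Qed.


Lemma ker_Iv j : forall a, (a + j.*2 <= n)%N ->
  ~~ odd #|Iv n a (a + j.*2)| /\
  forall s, kerPi s -> kerPi (rho (mono R (Iv n a (a + j.*2))) *m s).
Proof.
elim: j => [|j IH] a haj.
  rewrite /= addn0 Iv_nil cards0; split => // s hs.
  by rewrite mono0 rho_cl1 mul1mx.
have ha : (a.+1 < n)%N by move: haj; rewrite doubleS; lia.
have ha0 : (a < n)%N by apply: ltnW.
have ha2 : (a.+2 + j.*2 <= n)%N by move: haj; rewrite doubleS; lia.
have [IHc IHk] := IH _ ha2.
have eI : Iv n a (a + j.*2.+2) =
   [set Ordinal ha0; Ordinal ha] :|: Iv n a.+2 (a.+2 + j.*2).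
  by rewrite (Iv_cons _ ha0) (Iv_cons _ ha) setUA.
have ab : (Ordinal ha0 < Ordinal ha)%N by [].
have nab : Ordinal ha0 != Ordinal ha by rewrite -val_eqE /= neq_ltn ltnSn.
have [c1 s1] : clsign R p [set Ordinal ha0; Ordinal ha] (Iv n a.+2 (a.+2 + j.*2)) = 1 /\
   symd [set Ordinal ha0; Ordinal ha] (Iv n a.+2 (a.+2 + j.*2)) =
   [set Ordinal ha0; Ordinal ha] :|: Iv n a.+2 (a.+2 + j.*2).
  apply: clsign_lt => x y; rewrite !inE -!val_eqE /=.
  by case/orP => /eqP -> /andP [h _]; lia.
have em : mono R (Iv n a (a + j.*2.+2)) =
    clmul p (mono R [set Ordinal ha0; Ordinal ha]) (mono R (Iv n a.+2 (a.+2 + j.*2))).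
  rewrite clmul_mono c1 s1 -eI; apply/ffunP => C; by rewrite !ffunE mul1r.
have ev1 : cleven (mono R [set Ordinal ha0; Ordinal ha]).
  by apply: cleven_mono; rewrite cards2 nab.
have ev2 : cleven (mono R (Iv n a.+2 (a.+2 + j.*2))) by apply: cleven_mono.
rewrite doubleS; split.
  rewrite card_Iv; first by rewrite -doubleS odd_double.
  by rewrite -doubleS.
move=> s hs; rewrite em rho_mul // -mulmxA.
by apply: ker_pair => //; apply: IHk.
Qed.

Definition eta (i : 'I_n) : R := if (i < p)%N then 1 else -1.

Lemma spq_stdb (k : 'I_n) z : spq p (stdb R k) z = eta k * z k 0.
Proof.
rewrite /spq (bigD1 k) //= big1 ?addr0; first by rewrite mxE eqxx mulr1.
move=> i nik; rewrite mxE.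
have -> : (i == k :> nat) = false by apply/negbTE; rewrite val_eqE.
by rewrite mulr0 mul0r.
Qed.

Lemma stdb_ent (k i : 'I_n) : stdb R k i 0 = if i == k then 1 else 0.
Proof. by rewrite mxE val_eqE. Qed.

Lemma PZ (i : 'I_n) a s t : Pi (a *: s) t i 0 = a * Pi s t i 0.
Proof. by rewrite PiZl mxE. Qed.
Lemma PZr (i : 'I_n) a s t : Pi s (a *: t) i 0 = a * Pi s t i 0.
Proof. by rewrite PiZr mxE. Qed.

Lemma key (i0 : 'I_n) : val i0 = 0%N -> forall u,
  (forall t, Pi u t i0 0 = 0) -> kerPi u.
Proof.
move=> h0 u hu t; apply/matrixP => k j; rewrite (ord1 j) [RHS]mxE.
case: (eqVneq k i0) => [-> | nk]; first exact: hu.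
have ab : (i0 < k)%N.
  rewrite h0 lt0n; apply: contra nk => /eqP e; apply/eqP/val_inj; by rewrite /= e h0.
have nik : i0 != k by rewrite eq_sym.
set X := rho (spinel p (stdb R i0) (stdb R k)).
have hX : X = (- 2%:R^-1) *: rho (mono R [set i0; k]).
  by rewrite /X spinel_pair // rho_scal //; apply: cleven_mono; rewrite cards2 nik.
set mu : R := 4%:R^-1 * (- (clsq R p i0 * clsq R p k)).
have XX x : X *m (X *m x) = mu *: x.
  rewrite mulmxA hX -scalemxAl -scalemxAr scalerA rho_sq ?cards2 ?nik //.
  rewrite clsign_pair // scalerA -scalemxAl mul1mx; congr (_ *: _).
  rewrite /mu; field.
  done.
have E0 x y : Pi (X *m x) y i0 0 + Pi x (X *m y) i0 0 = eta k * Pi x y k 0.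
  have := congr1 (fun M : 'cV[R]_n => M i0 0) (Heq (stdb R i0) (stdb R k) x y).
  rewrite /soV !mxE !spq_stdb !val_eqE eqxx (negbTE nik) => ->; ring.
have Ek x y : Pi (X *m x) y k 0 + Pi x (X *m y) k 0 = - eta i0 * Pi x y i0 0.
  have := congr1 (fun M : 'cV[R]_n => M k 0) (Heq (stdb R i0) (stdb R k) x y).
  rewrite /soV !mxE !spq_stdb !val_eqE eqxx (negbTE nk) => ->; ring.
have LR x y : Pi (X *m x) (X *m y) i0 0 = mu * Pi x y i0 0.
  have h1 := Ek x y; have h2 := E0 (X *m x) y; have h3 := E0 x (X *m y).
  rewrite XX PZ in h2; rewrite XX PZr in h3.
  move: h1 h2 h3; rewrite /mu /eta /clsq.
  case: ifP => _; case: ifP => _ h1 h2 h3; lra.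
have mu0 : mu != 0.
  rewrite /mu /clsq; case: ifP => _; case: ifP => _; rewrite ?mulrN1 ?mulr1 ?opprK;
    by rewrite ?mulf_neq0 ?oppr_eq0 ?invr_eq0 ?pnatr_eq0 ?oner_eq0.
have e := E0 u t; rewrite hu addr0 in e.
have et : t = mu^-1 *: (X *m (X *m t)) by rewrite XX scalerA mulVf // scale1r.
have e0 : Pi (X *m u) t i0 0 = 0 by rewrite et PZr LR hu !mulr0.
rewrite e0 in e; move: e; rewrite /eta; case: ifP => _; lra.
Qed.
Lemma clsign_neq0 (A B : {set 'I_n}) : clsign R p A B != 0.
Proof.
rewrite /clsign mulf_neq0 ?expf_neq0 ?oppr_eq0 ?oner_eq0 // ?oner_neq0 //.
apply: (big_ind (fun x : R => x != 0)); first exact: oner_neq0.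
  by move=> x y; apply: mulf_neq0.
by move=> i _; rewrite /clsq; case: ifP => _; rewrite ?oppr_eq0 oner_eq0.
Qed.

Lemma main_kernel p' (i0 : 'I_n) : val i0 = 0%N -> (0 < p)%N -> odd p' ->
  (p' <= n)%N -> forall s,
  (forall t, Pi s t = 0) <-> (forall t, bform p p' rho Pi s t = 0).
Proof.
move=> h0 hp0 hodd hpn s.
have hpe : p' = (1 + (p'./2).*2)%N by rewrite -{1}(odd_double_half p') hodd.
have hpm : (p'.-1 = (p'./2).*2)%N by rewrite {1}hpe.
have hpn' : (1 + (p'./2).*2 <= n)%N by rewrite -hpe.
have hb : forall t, bform p p' rho Pi s t =
    Pi (rho (mono R (Iv n 1 (1 + (p'./2).*2))) *m s) t i0 0.
  move=> t; rewrite /bform.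
  have -> : stdb R 0 = stdb R i0 by rewrite h0.
  by rewrite spq_stdb /eta h0 hp0 mul1r /gammaE hpm gamma_fold.
have [hev hker] := ker_Iv hpn'.
set Om := rho (mono R (Iv n 1 (1 + (p'./2).*2))).
have hsq : Om *m Om = clsign R p (Iv n 1 (1 + (p'./2).*2)) (Iv n 1 (1 + (p'./2).*2)) *: 1%:M.
  by apply: rho_sq.
split.
  move=> hs t; rewrite hb (hker s hs t); by rewrite mxE.
move=> hbs.
have k1 : kerPi (Om *m s) by apply: (key h0) => t; rewrite -hb.
have k2 := hker _ k1.
rewrite mulmxA hsq -scalemxAl mul1mx in k2.
have := ker_scale (clsign R p (Iv n 1 (1 + (p'./2).*2)) (Iv n 1 (1 + (p'./2).*2)))^-1 k2.
by rewrite scalerA mulVf ?clsign_neq0 // scale1r.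
Qed.

End Main.

Lemma nondeg_iff (R : realType) (m : nat) (T : zmodType) (f : 'cV[R]_m -> 'cV[R]_m -> T) :
  (forall s s' t, f (s - s') t = f s t - f s' t) ->
  ((forall s s', (forall t, f s t = f s' t) -> s = s') <->
   (forall s, (forall t, f s t = 0) -> s = 0)).
Proof.
move=> lin; split.
  move=> h s hs; apply: h => t; rewrite hs.
  by have := lin 0 0 t; rewrite subrr subrr.
move=> h s s' hss; apply/eqP; rewrite -subr_eq0; apply/eqP; apply: h => t.
by rewrite lin hss subrr.
Qed.


Lemma spqB (R : realType) (p n : nat) (x z z' : 'cV[R]_n) :
  spq p x (z - z') = spq p x z - spq p x z'.
Proof. rewrite /spq -sumrB; apply: eq_bigr => i _; rewrite !mxE; ring. Qed.

Unset Implicit Arguments.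
Set Strict Implicit.

Theorem mainTheorem2 (R : realType) (p q p' p'' m : nat)
    (rho : {ffun {set 'I_(p + q)} -> R} -> 'M[R]_m)
    (Pi : 'cV[R]_m -> 'cV[R]_m -> 'cV[R]_(p + q)) :
  is_cl0_module p rho ->
  is_wedge2_map Pi ->
  equivariant p rho Pi ->
  p = (p' + p'')%N ->
  (p' %% 4 = 3)%N ->
  (forall s : 'cV[R]_m,
      (forall t, Pi s t = 0) <-> (forall t, bform p p' rho Pi s t = 0))
  /\ (Pi_nondeg Pi <-> form_nondeg (bform p p' rho Pi)).
Proof.
move=> Hrho HPi Heq hp h3.
have hodd : odd p'.
  by rewrite (divn_eq p' 4) h3 oddD oddM andbF.
have hp0 : (0 < p)%N by lia.
have hpn : (p' <= p + q)%N by lia.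
have hn : (0 < p + q)%N by lia.
have K := main_kernel Hrho HPi Heq (i0 := Ordinal hn) erefl hp0 hodd hpn.
split; first exact: K.
rewrite /Pi_nondeg /form_nondeg (nondeg_iff (f := Pi)); last exact: PiBl.
rewrite (nondeg_iff (f := bform p p' rho Pi)); last first.
  by move=> s s' t; rewrite /bform mulmxBr (PiBl HPi) spqB.
by split => h s hs; apply: h; apply/K.
Qed.
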